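(* Let $\sigma$ be a countable relational signature containing distinct relation symbols $Q,R$ with the arity of $R$ at least $2$. Let $\mathbf P=\{\mathcal A\in\mathbf S_\sigma:\mathcal A\text{ has only finitely many orbits}\}$. Then $\mathbf P$ is not expressible in $FO(\sigma)$; every abstract logic $L(\sigma)\geq FO(\sigma)$ that can express $\mathbf P$ fails the $\aleph_0$-compactness property; and every such logic which is moreover closed under negation has no sound and complete proof system.
   Context: An orbit of a $\sigma$-structure $\mathcal A$ is an equivalence class of the relation $a\sim b\iff f(a)=b$ for some $f\in\mathrm{Aut}(\mathcal A)$; the orbits partition $A$. $\mathbf S_\sigma$ is the class of $\sigma$-structures. An abstract logic over $\sigma$ is a pair $(L(\sigma),\models_{L(\sigma)})$ with isomorphism-invariant satisfaction relation; a class is expressed by it if some sentence is satisfied exactly by its members; $L(\sigma)\geq FO(\sigma)$ means every first-order expressible class is $L(\sigma)$-expressible; $\aleph_0$-compactness: every countable finitely satisfiable set of sentences is satisfiable; closed under negation: each sentence has a sentence true exactly where it is false. A proof system $(\Pi,p,c)$ assigns to each $\pi$ a finite sequence of premisses and a conclusion; sound: premisses semantically entail the conclusion; complete: whenever $\Gamma$ entails $\psi$ some $\pi$ has conclusion $\psi$ and all premisses in $\Gamma$. *)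

(* Defs.v *)
From mathcomp Require Import all_boot.
From Stdlib Require Import List.
Import ListNotations.
Set Implicit Arguments.
Unset Strict Implicit.
Unset Printing Implicit Defensive.

Section Logic.
Variables (S : Type) (ar : S -> nat).

(* sigma-structures: nonempty carrier, interpretation of each relation symbol
   as a set of ar(s)-tuples (tuples = functions 'I_(ar s) -> carrier). *)
Record structure := Structure {
  carrier :> Type;
  point : carrier;
  interp : forall s : S, ('I_(ar s) -> carrier) -> Prop
}.
Arguments interp : clear implicits.
Arguments interp A s a : rename.

Definition is_iso (A B : structure) (f : A -> B) : Prop :=
  bijective f /\
  forall (s : S) (a : 'I_(ar s) -> A), interp A s a <-> interp B s (fun i => f (a i)).

Definition isomorphic (A B : structure) : Prop := exists f : A -> B, is_iso f.

Definition automorphism (A : structure) (f : A -> A) : Prop := is_iso f.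

Definition same_orbit (A : structure) (a b : A) : Prop :=
  exists f : A -> A, automorphism f /\ f a = b.

Definition finitely_many_orbits (A : structure) : Prop :=
  exists l : list A, forall a : A, exists b, In b l /\ same_orbit b a.

Definition struct_class := structure -> Prop.

Inductive formula :=
| FRel (s : S) (args : 'I_(ar s) -> nat)
| FEq (x y : nat)
| FNeg (phi : formula)
| FAnd (phi psi : formula)
| FEx (x : nat) (phi : formula).

Definition upd (A : structure) (v : nat -> A) (x : nat) (a : A) : nat -> A :=
  fun y => if y == x then a else v y.

Fixpoint eval (A : structure) (v : nat -> A) (phi : formula) : Prop :=
  match phi with
  | FRel s args => interp A s (fun i => v (args i))
  | FEq x y => v x = v y
  | FNeg phi => ~ eval v phi
  | FAnd phi psi => eval v phi /\ eval v psi
  | FEx x phi => exists a : A, eval (upd v x a) phi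
  end.

Fixpoint free (x : nat) (phi : formula) : Prop :=
  match phi with
  | FRel s args => exists i, args i = x
  | FEq y z => x = y \/ x = z
  | FNeg phi => free x phi
  | FAnd phi psi => free x phi \/ free x psi
  | FEx y phi => x <> y /\ free x phi
  end.

Definition fo_sentence (phi : formula) : Prop := forall x, ~ free x phi.

Definition fo_sat (A : structure) (phi : formula) : Prop :=
  forall v : nat -> A, eval v phi.

Definition FO_expressible (K : struct_class) : Prop :=
  exists phi, fo_sentence phi /\ forall A, K A <-> fo_sat A phi.

Record abstract_logic := AbstractLogic {
  sentence : Type;
  sat : structure -> sentence -> Prop;
  sat_iso : forall A B phi, isomorphic A B -> (sat A phi <-> sat B phi)
}.

Definition expressible (L : abstract_logic) (K : struct_class) : Prop :=
  exists phi : sentence L, forall A, K A <-> sat A phi.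

Definition geq_FO (L : abstract_logic) : Prop :=
  forall K, FO_expressible K -> expressible L K.

Definition countable_set (T : Type) (G : T -> Prop) : Prop :=
  exists e : nat -> option T, forall x, G x <-> exists n, e n = Some x.

Definition satisfies_all (L : abstract_logic) (A : structure) (G : sentence L -> Prop) :=
  forall phi, G phi -> sat A phi.

Definition satisfiable (L : abstract_logic) (G : sentence L -> Prop) : Prop :=
  exists A, satisfies_all A G.

Definition finitely_satisfiable (L : abstract_logic) (G : sentence L -> Prop) : Prop :=
  forall l : list (sentence L), (forall phi, In phi l -> G phi) ->
    exists A, forall phi, In phi l -> sat A phi.

Definition aleph0_compact (L : abstract_logic) : Prop :=
  forall G : sentence L -> Prop, countable_set G -> finitely_satisfiable G -> satisfiable G.

Definition closed_under_negation (L : abstract_logic) : Prop :=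
  forall phi : sentence L, exists psi : sentence L, forall A, sat A psi <-> ~ sat A phi.

Definition entails (L : abstract_logic) (G : sentence L -> Prop) (psi : sentence L) : Prop :=
  forall A, satisfies_all A G -> sat A psi.

Record proof_system (L : abstract_logic) := ProofSystem {
  proofs : Type;
  premisses : proofs -> list (sentence L);
  conclusion : proofs -> sentence L
}.

Definition ps_sound (L : abstract_logic) (P : proof_system L) : Prop :=
  forall pi : proofs P,
    entails (fun phi => In phi (premisses pi)) (conclusion pi).

Definition ps_complete (L : abstract_logic) (P : proof_system L) : Prop :=
  forall (G : sentence L -> Prop) (psi : sentence L), entails G psi ->
    exists pi : proofs P, conclusion pi = psi /\ forall phi, In phi (premisses pi) -> G phi.

End Logic.

(* Main.v *)
Require Import Defs.
From Stdlib Require Import List.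
From mathcomp Require Import all_boot.
From Stdlib Require Import Classical FunctionalExtensionality Eqdep_dec PeanoNat IndefiniteDescription.

Set Implicit Arguments.
Unset Strict Implicit.

Definition mkS (S : Type) (ar : S -> nat) (R : S) (C : Type) (c : C) (E : C -> C -> Prop)
  : structure ar :=
  @Structure S ar C c (fun s a => s = R /\ forall i j : 'I_(ar s),
        nat_of_ord i = 0 -> nat_of_ord j = 1 -> E (a i) (a j)).

Lemma upd_same (S : Type) (ar : S -> nat) (A : structure ar) (v : nat -> A) x a : upd v x a x = a.
Proof. by rewrite /upd eqxx. Qed.
Lemma upd_other (S : Type) (ar : S -> nat) (A : structure ar) (v : nat -> A) x a y : y <> x -> upd v x a y = v y.
Proof. by move=> H; rewrite /upd; case: eqP. Qed.

Lemma eval_free (S : Type) (ar : S -> nat) (A : structure ar) (phi : formula ar) : forall (v w : nat -> A),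
  (forall x, free x phi -> v x = w x) -> (eval v phi <-> eval w phi).
Proof.
elim: phi => [s args|x y|phi IH|phi IH psi IH2|x phi IH] v w H /=.
- have -> : (fun i => v (args i)) = (fun i => w (args i)).
    by apply: functional_extensionality => i; apply: H; exists i.
  by [].
- by rewrite (H x (or_introl erefl)) (H y (or_intror erefl)).
- by rewrite (IH v w H).
- by rewrite (IH v w (fun x h => H x (or_introl h))) (IH2 v w (fun x h => H x (or_intror h))).
- have K : forall a y, free y phi -> upd v x a y = upd w x a y.
    move=> a y Hy; case: (eqVneq y x) => [->|ne]; first by rewrite !upd_same.
    rewrite !upd_other; try exact/eqP. apply: H; split=>//; exact/eqP.
  split=> [[a Ha]|[a Ha]]; exists a; move: Ha; apply IH => y Hy; by [apply K | symmetry; apply K].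
Qed.
Definition updf (C : Type) (v : nat -> C) (x : nat) (a : C) : nat -> C :=
  fun y => if y == x then a else v y.

Definition Wrel C1 C2 (E1 : C1 -> C1 -> Prop) (E2 : C2 -> C2 -> Prop) (v1 : nat -> C1) (v2 : nat -> C2) :=
  (exists l1 : list C1, forall x, In (v1 x) l1) /\ (exists l2 : list C2, forall x, In (v2 x) l2) /\
  (forall x y, v1 x = v1 y <-> v2 x = v2 y) /\ (forall x y, E1 (v1 x) (v1 y) <-> E2 (v2 x) (v2 y)).

Definition equivr C (E : C -> C -> Prop) :=
  (forall x, E x x) /\ (forall x y, E x y -> E y x) /\ (forall x y z, E x y -> E y z -> E x z).

Definition extp C (E : C -> C -> Prop) :=
  (forall l : list C, exists b, forall c, In c l -> ~ E b c) /\
  (forall (c : C) (l : list C), exists b, E b c /\ ~ In b l).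

Lemma Wrel_sym C1 C2 (E1 : C1 -> C1 -> Prop) (E2 : C2 -> C2 -> Prop) v1 v2 :
  Wrel E1 E2 v1 v2 -> Wrel E2 E1 v2 v1.
Proof.
case=> h1 [h2 [h3 h4]]; split=>//; split=>//; split=> x y; [by rewrite h3 | by rewrite h4].
Qed.

Lemma Wrel_upd C1 C2 (E1 : C1 -> C1 -> Prop) (E2 : C2 -> C2 -> Prop) v1 v2 x a b :
  equivr E1 -> equivr E2 -> Wrel E1 E2 v1 v2 ->
  (forall w, a = v1 w <-> b = v2 w) -> (forall w, E1 a (v1 w) <-> E2 b (v2 w)) ->
  Wrel E1 E2 (updf v1 x a) (updf v2 x b).
Proof.
move=> [r1 [s1 t1]] [r2 [s2 t2]] [[l1 L1] [[l2 L2] [h3 h4]]] ha hE.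
split; first by exists (a :: l1) => y; rewrite /updf; case: (y == x); [left|right].
split; first by exists (b :: l2) => y; rewrite /updf; case: (y == x); [left|right].
split=> y z; rewrite /updf; case: (y == x); case: (z == x) => //.
- split=> H; symmetry; [apply/ha | apply/ha]; by symmetry.
- split=> H; [apply: s2; apply/hE; exact: s1 | apply: s1; apply/hE; exact: s2].
Qed.

Lemma forth C1 C2 (E1 : C1 -> C1 -> Prop) (E2 : C2 -> C2 -> Prop) v1 v2 x a :
  equivr E1 -> equivr E2 -> extp E2 -> Wrel E1 E2 v1 v2 ->
  exists b, Wrel E1 E2 (updf v1 x a) (updf v2 x b).
Proof.
move=> eq1 eq2 [ex1 ex2] W.
have W' := W; case: W' => _ [[l2 L2] [h3 h4]].
have [r1 [s1 t1]] := eq1; have [r2 [s2 t2]] := eq2.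
case: (classic (exists y, a = v1 y)) => [[y ->]|n1].
  exists (v2 y); apply: Wrel_upd => //.
case: (classic (exists y, E1 a (v1 y))) => [[y Hy]|n2].
  case: (ex2 (v2 y) l2) => b [Hb nb].
  exists b; apply: Wrel_upd => // w.
    split=> H; [by case: n1; exists w | by case: nb; rewrite H].
  split=> H.
    apply: t2 Hb _; apply/h4; exact: t1 (s1 _ _ Hy) H.
  apply: t1 Hy _; apply/h4; exact: t2 (s2 _ _ Hb) H.
case: (ex1 l2) => b Hb.
exists b; apply: Wrel_upd => // w.
  split=> H; [by case: n1; exists w | by case: (Hb (v2 w) (L2 w)); rewrite H; apply: r2].
split=> H; [by case: n2; exists w | by case: (Hb (v2 w) (L2 w))].
Qed.

Lemma EF (S : Type) (ar : S -> nat) (R : S) C1 C2 (c1 : C1) (c2 : C2)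
  (E1 : C1 -> C1 -> Prop) (E2 : C2 -> C2 -> Prop) :
  equivr E1 -> equivr E2 -> extp E1 -> extp E2 ->
  forall (phi : formula ar) v1 v2, Wrel E1 E2 v1 v2 ->
  (@eval S ar (mkS ar R c1 E1) v1 phi <-> @eval S ar (mkS ar R c2 E2) v2 phi).
Proof.
move=> q1 q2 x1 x2; elim=> [s args|x y|phi IH|phi IH psi IH2|x phi IH] v1 v2 W /=.
- have [_ [_ [_ h4]]] := W.
  split=> [[e H]|[e H]]; split=> // i j hi hj; apply/h4; exact: H.
- by have [_ [_ [h3 _]]] := W; apply: h3.
- by rewrite (IH v1 v2 W).
- by rewrite (IH v1 v2 W) (IH2 v1 v2 W).
- split=> [[a Ha]|[b Hb]].
    have [b Wb] := forth x a q1 q2 x2 W.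
    exists b; apply/(IH (updf v1 x a)) => //.
  have [a Wa] := forth x b q2 q1 x1 (Wrel_sym W).
  exists a; apply/(IH _ (updf v2 x b)) => //; exact: Wrel_sym.
Qed.

Lemma In_le_max (C : Type) (f : C -> nat) (l : list C) c :
  In c l -> f c <= foldr (fun c m => maxn (f c) m) 0 l.
Proof.
elim: l => //= d l IH [->|H]; first exact: leq_maxl.
exact: leq_trans (IH H) (leq_maxr _ _).
Qed.

Lemma interp_tup (S : Type) (ar : S -> nat) (R : S) C (c : C) (E : C -> C -> Prop) x y :
  2 <= ar R ->
  (@interp S ar (mkS ar R c E) R (fun i : 'I_(ar R) => if nat_of_ord i == 0 then x else y) <-> E x y).
Proof.
move=> h; split.
- case=> _ H.
  have h0 : 0 < ar R by apply: leq_trans h.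
  have := H (Ordinal h0) (Ordinal h) erefl erefl. by [].
- move=> Exy; split=> // i j -> ->; exact Exy.
Qed.

Lemma iso_E (S : Type) (ar : S -> nat) (R : S) C (c : C) (E : C -> C -> Prop) (f : C -> C) x y :
  2 <= ar R -> @automorphism S ar (mkS ar R c E) f -> (E (f x) (f y) <-> E x y).
Proof.
move=> h [_ H].
rewrite -(@interp_tup S ar R C c E x y h) -(@interp_tup S ar R C c E (f x) (f y) h).
have -> : (fun i : 'I_(ar R) => if nat_of_ord i == 0 then f x else f y) =
          (fun i => f (if nat_of_ord i == 0 then x else y)).
  by apply: functional_extensionality => i; case: (_ == 0).
exact: iff_sym (H R _).
Qed.

Definition EA (p q : nat * nat) := p.1 = q.1.
Definition swp (i x : nat) := if x == 0 then i else if x == i then 0 else x.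
Lemma swpK i : cancel (swp i) (swp i).
Proof.
move=> x; rewrite /swp.
case: (eqVneq x 0) => [->|h0].
  rewrite eqxx; case: (eqVneq i 0) => [->|hi] //; by rewrite (negbTE hi) eqxx.
case: (eqVneq x i) => [->|hx]; first by rewrite !eqxx.
by rewrite (negbTE h0) (negbTE hx).
Qed.

Lemma equivr_EA : equivr EA.
Proof. rewrite /EA; split=> //; split=> [x y ->|x y z -> ->] //. Qed.

Lemma extp_EA : extp EA.
Proof.
split.
- move=> l; exists ((foldr (fun c m => maxn (fst c) m) 0 l).+1, 0) => c H; rewrite /EA /= => e.
  have := In_le_max fst H; rewrite -e ltnn //.
- move=> c l; exists (c.1, (foldr (fun c m => maxn (snd c) m) 0 l).+1); split=> // H.
  have := In_le_max snd H; rewrite /= ltnn //.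
Qed.

Lemma PA (S : Type) (ar : S -> nat) (R : S) :
  finitely_many_orbits (mkS ar R (0,0) EA).
Proof.
exists [:: (0,0)] => a; exists (0,0); split; first by left.
exists (fun p => (swp a.1 p.1, swp a.2 p.2)); split.
  split.
    exists (fun p => (swp a.1 p.1, swp a.2 p.2)) => p; by rewrite /= !swpK; case: p.
  move=> s t; rewrite /=; have K : forall p q : nat * nat, EA (swp a.1 p.1, swp a.2 p.2) (swp a.1 q.1, swp a.2 q.2) <-> EA p q.
    move=> p q; rewrite /EA /=; split=> [e|->] //; by rewrite -(swpK a.1 p.1) e swpK.
  split=> [[e H]|[e H]]; split=> // i j hi hj; [apply/K|apply/K]; exact: H.
by case: a.
Qed.

Fixpoint T (n : nat) : Type := match n with 0 => nat | m.+1 => (nat * (T m -> Prop))%type end.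
Definition CB := {n : nat & T n}.
Definition EB (p q : CB) := projT1 p = projT1 q.
Definition key (n : nat) : T n -> nat := match n with 0 => fun t => t | m.+1 => fun t => t.1 end.
Definition mk (n : nat) (j : nat) : T n := match n with 0 => j | m.+1 => (j, fun _ => True) end.
Lemma key_mk n j : key (mk n j) = j. Proof. by case: n. Qed.
Definition keyB (p : CB) := key (projT2 p).

Lemma equivr_EB : equivr EB.
Proof. rewrite /EB; split=> //; split=> [x y ->|x y z -> ->] //. Qed.

Lemma extp_EB : extp EB.
Proof.
split.
- move=> l; exists (existT T (foldr (fun c m => maxn (projT1 c) m) 0 l).+1 (mk _ 0)) => c H; rewrite /EB /= => e.
  have := In_le_max (@projT1 _ _) H; rewrite -e ltnn //.
- move=> c l; exists (existT T (projT1 c) (mk _ (foldr (fun c m => maxn (keyB c) m) 0 l).+1)); split=> // H.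
  have := In_le_max keyB H; rewrite /keyB /= key_mk ltnn //.
Qed.

Fixpoint lift (m k : nat) : T m.+1 -> T (k + m.+1) :=
  match k with 0 => fun x => x | k'.+1 => fun x => (0, fun y => y = lift k' x) end.

Lemma lift_inj m k : injective (@lift m k).
Proof.
elim: k => //= k IH x y [] e; apply: IH.
have := f_equal (fun h => h (lift k x)) e => /= e'. by rewrite -e'.
Qed.

Definition get m (p : CB) (d : T m) : T m :=
  match Nat.eq_dec (projT1 p) m with
  | left e => eq_rect _ T (projT2 p) _ e
  | right _ => d end.

Lemma get_id m t d : get (existT T m t) (d : T m) = t.
Proof.
rewrite /get /=; case: (Nat.eq_dec m m) => [e|//].
by rewrite (Eqdep_dec.UIP_refl_nat _ e).
Qed.

Lemma get_inj m d p q : projT1 p = m -> projT1 q = m -> get p (d : T m) = get q d -> p = q.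
Proof.
case: p => n t; case: q => n' t' /= e e'; subst; rewrite !get_id => -> //.
Qed.

Lemma cantor (X : Type) (j : (X -> Prop) -> X) : ~ injective j.
Proof.
move=> ij.
pose D := fun x => ~ exists h, j h = x /\ h x.
have K : D (j D) <-> ~ D (j D).
  split=> [H H'|H]. by apply: H; exists D.
  move=> [h [e hx]]; have eh := ij _ _ e; subst h; exact: H hx.
by apply: (proj1 K); apply/(proj2 K) => H; exact: (proj1 K H H).
Qed.

Lemma notPB (S : Type) (ar : S -> nat) (R : S) : 2 <= ar R ->
  ~ finitely_many_orbits (mkS ar R (existT T 0 (0 : T 0) : CB) EB).
Proof.
move=> h [l Hl].
pose N := (foldr (fun c m => maxn (projT1 c) m) 0 l).+1.
have [b [inb [f [af fb]]]] := Hl (existT T N (mk N 0)).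
have ltm : projT1 b < N by rewrite ltnS; apply: (In_le_max (@projT1 _ _) inb).
pose m := projT1 b.
have [g fg gf] := proj1 af.
have HE : forall x y, EB (f x) (f y) <-> EB x y := fun x y => @iso_E S ar R CB _ EB f x y h af.
have Kp : forall p, projT1 p = N -> projT1 (g p) = m.
  move=> p hp; have : EB (f (g p)) (f b) by rewrite gf fb /EB /= hp.
  by move/HE.
pose k := N - m.+1.
have hN : k + m.+1 = N by rewrite /k subnK.
pose j := fun hh : T m -> Prop => get (g (existT T (k + m.+1) (lift k ((0, hh) : T m.+1)))) (mk m 0).
apply: (@cantor _ j) => h1 h2 e.
have := get_inj (Kp (existT T _ (lift k ((0,h1) : T m.+1))) hN) (Kp (existT T _ (lift k ((0,h2) : T m.+1))) hN) e.
move/(can_inj gf) => e2.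
have := Eqdep_dec.inj_pair2_eq_dec nat Nat.eq_dec T _ _ _ e2.
by move/lift_inj => [].
Qed.

Lemma part1 (S : Type) (ar : S -> nat) (R : S) : 2 <= ar R ->
  ~ FO_expressible (fun A : structure ar => finitely_many_orbits A).
Proof.
move=> h [phi [sent H]].
pose A := mkS ar R ((0,0) : nat * nat) EA.
pose B := mkS ar R (existT T 0 (0 : T 0) : CB) EB.
have HA : fo_sat A phi by apply/H; exact: PA.
have W : Wrel EA EB (fun _ => ((0,0) : nat * nat)) (fun _ => (existT T 0 (0 : T 0) : CB)).
  split; first by exists [:: (0,0)] => x; left.
  split; first by exists [:: existT T 0 (0 : T 0)] => x; left.
  by split.
have e0 : @eval S ar B (fun _ => existT T 0 (0 : T 0)) phi.
  apply/(EF R (0,0) (existT T 0 (0 : T 0)) equivr_EA equivr_EB extp_EA extp_EB phi W).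
  exact: HA.
apply: (notPB h); apply/H => v.
have := @eval_free S ar B phi v (fun _ => existT T 0 (0 : T 0)).
case=> [x fx|_ K]; [by case: (sent x) | exact: K].
Qed.


Definition Eat (S : Type) (ar : S -> nat) (R : S) (a b : nat) : formula ar :=
  @FRel S ar R (fun i : 'I_(ar R) => if nat_of_ord i == 0 then a else b).
Definition Erel (S : Type) (ar : S -> nat) (R : S) (X : structure ar) (x y : X) :=
  @interp S ar X R (fun i : 'I_(ar R) => if nat_of_ord i == 0 then x else y).

Lemma eval_Eat (S : Type) (ar : S -> nat) (R : S) (X : structure ar) (v : nat -> X) a b :
  eval v (Eat ar R a b) <-> Erel R (v a) (v b).
Proof.
rewrite /Eat /Erel /=.
have -> : (fun i : 'I_(ar R) => v (if nat_of_ord i == 0 then a else b)) =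
          (fun i => if nat_of_ord i == 0 then v a else v b).
  by apply: functional_extensionality => i; case: (_ == 0).
by [].
Qed.

Arguments Eat : simpl never.

Lemma aut_Erel (S : Type) (ar : S -> nat) (R : S) (X : structure ar) (f : X -> X) x y :
  automorphism f -> (Erel R (f x) (f y) <-> Erel R x y).
Proof.
move=> [_ H]; rewrite /Erel.
have -> : (fun i : 'I_(ar R) => if nat_of_ord i == 0 then f x else f y) =
          (fun i => f (if nat_of_ord i == 0 then x else y)).
  by apply: functional_extensionality => i; case: (_ == 0).
exact: iff_sym (H R _).
Qed.

Definition Fall (S : Type) (ar : S -> nat) x (phi : formula ar) := FNeg (FEx x (FNeg phi)).
Definition Fimp (S : Type) (ar : S -> nat) (phi psi : formula ar) := FNeg (FAnd phi (FNeg psi)).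

Lemma eval_Fall (S : Type) (ar : S -> nat) (X : structure ar) (v : nat -> X) x phi :
  eval v (Fall x phi) <-> forall a, eval (upd v x a) phi.
Proof.
rewrite /=; split=> [H a|H [a Ha]]; last exact: Ha.
by apply: NNPP => Ha; apply: H; exists a.
Qed.

Lemma eval_Fimp (S : Type) (ar : S -> nat) (X : structure ar) (v : nat -> X) phi psi :
  eval v (Fimp phi psi) <-> (eval v phi -> eval v psi).
Proof.
rewrite /=; split=> [H h|H [h1 h2]]; last exact: h2 (H h1).
by apply: NNPP => h2; apply: H.
Qed.

Fixpoint pos (S : Type) (ar : S -> nat) (R : S) (n : nat) : formula ar :=
  match n with
  | 0 => FNeg (FEx 1 (Eat ar R 1 0))
  | n'.+1 => FEx n' (FAnd (pos ar R n') (Eat ar R n' n'.+1))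
  end.

Fixpoint Pn (S : Type) (ar : S -> nat) (R : S) (X : structure ar) (n : nat) (a : X) : Prop :=
  match n with
  | 0 => ~ exists y, Erel R y a
  | n'.+1 => exists y, Pn R n' y /\ Erel R y a
  end.

Lemma eval_pos (S : Type) (ar : S -> nat) (R : S) (X : structure ar) n :
  forall v : nat -> X, eval v (pos ar R n) <-> Pn R n (v n).
Proof.
elim: n => [|n IH] v /=.
  split=> H [y Hy]; apply: H; exists y.
    by apply/(@eval_Eat S ar R X (upd v 1 y) 1 0).
  by move: Hy => /(@eval_Eat S ar R X (upd v 1 y) 1 0).
have ne : n.+1 <> n by move/eqP; rewrite gtn_eqF.
split=> [[a [h1 h2]]|[a [h1 h2]]]; exists a.
  move: h1 h2 => /(IH (upd v n a)) h1 /(@eval_Eat S ar R X (upd v n a) n n.+1).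
  rewrite upd_same upd_other // => h3; split=> //; move: h1; by rewrite upd_same.
split; first by apply/(IH (upd v n a)); rewrite upd_same.
by apply/(@eval_Eat S ar R X (upd v n a) n n.+1); rewrite upd_same upd_other.
Qed.

Definition root (S : Type) (ar : S -> nat) (R : S) x z : formula ar := FNeg (FEx z (Eat ar R z x)).
Definition ax1 (S : Type) (ar : S -> nat) (R : S) : formula ar :=
  Fall 0 (Fall 1 (Fimp (root ar R 0 2) (Fimp (root ar R 1 2) (FEq ar 0 1)))).
Definition ax2 (S : Type) (ar : S -> nat) (R : S) : formula ar :=
  Fall 0 (Fall 1 (Fall 2 (Fimp (Eat ar R 0 1) (Fimp (Eat ar R 0 2) (FEq ar 1 2))))).
Definition ax3 (S : Type) (ar : S -> nat) (R : S) : formula ar :=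
  Fall 0 (Fall 1 (Fall 2 (Fimp (Eat ar R 0 2) (Fimp (Eat ar R 1 2) (FEq ar 0 1))))).
Definition chi (S : Type) (ar : S -> nat) (R : S) n : formula ar :=
  FAnd (FAnd (ax1 ar R) (FAnd (ax2 ar R) (ax3 ar R))) (FEx n (pos ar R n)).

Definition Ax (S : Type) (ar : S -> nat) (R : S) (X : structure ar) :=
  (forall a b : X, ~ (exists y, Erel R y a) -> ~ (exists y, Erel R y b) -> a = b) /\
  (forall y x x' : X, Erel R y x -> Erel R y x' -> x = x') /\
  (forall y y' x : X, Erel R y x -> Erel R y' x -> y = y').

Lemma eval_FAnd (S : Type) (ar : S -> nat) (X : structure ar) (v : nat -> X) phi psi :
  eval v (FAnd phi psi) <-> eval v phi /\ eval v psi.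
Proof. by []. Qed.

Lemma eval_all2 (S : Type) (ar : S -> nat) (X : structure ar) (v : nat -> X) x y phi :
  eval v (Fall x (Fall y phi)) <-> forall a b, eval (upd (upd v x a) y b) phi.
Proof.
split=> [/eval_Fall H a b|H]; first by move/eval_Fall: (H a) => /(_ b).
apply/eval_Fall => a; apply/eval_Fall => b; exact: H.
Qed.

Lemma eval_all3 (S : Type) (ar : S -> nat) (X : structure ar) (v : nat -> X) x y z phi :
  eval v (Fall x (Fall y (Fall z phi))) <-> forall a b c, eval (upd (upd (upd v x a) y b) z c) phi.
Proof.
split=> [/eval_all2 H a b c|H]; first by move/eval_Fall: (H a b) => /(_ c).
apply/eval_all2 => a b; apply/eval_Fall => c; exact: H.
Qed.

Lemma eval_root (S : Type) (ar : S -> nat) (R : S) (X : structure ar) (v : nat -> X) x z :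
  z <> x -> (eval v (root ar R x z) <-> ~ exists y, Erel R y (v x)).
Proof.
move=> ne; have ne' : x <> z by move=> e; apply: ne.
rewrite /root.
transitivity (~ exists y, eval (upd v z y) (Eat ar R z x)); first by [].
split=> H [y Hy]; apply: H; exists y.
  by apply/(@eval_Eat S ar R X (upd v z y) z x); rewrite upd_same upd_other.
by have := proj1 (@eval_Eat S ar R X (upd v z y) z x) Hy; rewrite upd_same upd_other.
Qed.

Lemma eval_chi (S : Type) (ar : S -> nat) (R : S) (X : structure ar) (v : nat -> X) n :
  eval v (chi ar R n) <-> Ax R X /\ exists a : X, Pn R n a.
Proof.
have E1 : eval v (FEx n (pos ar R n)) <-> exists a : X, Pn R n a.
  rewrite /=; split=> [[a Ha]|[a Ha]]; exists a.
    by move/eval_pos: Ha; rewrite upd_same.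
  by apply/eval_pos; rewrite upd_same.
have E2 : eval v (FAnd (ax1 ar R) (FAnd (ax2 ar R) (ax3 ar R))) <-> Ax R X.
  rewrite /Ax /ax1 /ax2 /ax3.
  rewrite !eval_FAnd; split; case=> H1 [H2 H3]; (split; [|split]).
  - move=> a b; move/eval_all2: H1 => /(_ a b).
    by rewrite !eval_Fimp !eval_root // /= /upd /=.
  - move=> a b c; move/eval_all3: H2 => /(_ a b c).
    by rewrite !eval_Fimp !eval_Eat /= /upd /=.
  - move=> a b c; move/eval_all3: H3 => /(_ a b c).
    by rewrite !eval_Fimp !eval_Eat /= /upd /=.
  - apply/eval_all2 => a b; rewrite !eval_Fimp !eval_root // /= /upd /=; exact: H1.
  - apply/eval_all3 => a b c; rewrite !eval_Fimp !eval_Eat /= /upd /=. exact: H2.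
  - apply/eval_all3 => a b c; rewrite !eval_Fimp !eval_Eat /= /upd /=; exact: H3.
transitivity (eval v (FAnd (ax1 ar R) (FAnd (ax2 ar R) (ax3 ar R))) /\ eval v (FEx n (pos ar R n))); first by [].
by rewrite E1 E2.
Qed.

Lemma free_Eat (S : Type) (ar : S -> nat) (R : S) a b y :
  free y (Eat ar R a b) -> y = a \/ y = b.
Proof. rewrite /Eat /= => -[i]; case: (_ == 0) => <-; auto. Qed.

Lemma free_pos (S : Type) (ar : S -> nat) (R : S) n y : free y (pos ar R n) -> y = n.
Proof.
elim: n y => [|n IH] y /=.
  case=> ne H; case: (@free_Eat S ar R 1 0 y H) => //.
case=> ne [/IH //|H]; case: (@free_Eat S ar R n n.+1 y H) => //.
Qed.

Lemma sent_chi (S : Type) (ar : S -> nat) (R : S) n : fo_sentence (chi ar R n).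
Proof.
move=> y.
have atom : forall a b, (exists i : 'I_(ar R), (if nat_of_ord i == 0 then a else b) = y) -> y = a \/ y = b.
  move=> a b [i]; case: (_ == 0) => <-; auto.
have fp := @free_pos S ar R n y.
rewrite /chi /ax1 /ax2 /ax3 /Fall /Fimp /root /= => H.
repeat match goal with
  | H : _ /\ _ |- _ => destruct H
  | H : _ \/ _ |- _ => destruct H
  | H : exists i : 'I_(ar R), _ |- _ => destruct (atom _ _ H); clear H
  | H : free y (pos _ _ _) |- _ => apply fp in H
  end; subst; congruence.
Qed.


Lemma Pn_aut (S : Type) (ar : S -> nat) (R : S) (X : structure ar) (f : X -> X) n :
  automorphism f -> forall x, Pn R n (f x) -> Pn R n x.
Proof.
move=> af; have [g fg gf] := proj1 af.
elim: n => [|n IH] x /=.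
  move=> H [y Hy]; apply: H; exists (f y); exact/(aut_Erel _ _ _ af).
move=> [y [Py Ey]]; exists (g y); split.
  by apply: IH; rewrite gf.
by apply/(aut_Erel _ _ _ af); rewrite gf.
Qed.

Lemma Pn_uniq (S : Type) (ar : S -> nat) (R : S) (X : structure ar) n :
  Ax R X -> forall a b : X, Pn R n a -> Pn R n b -> a = b.
Proof.
move=> [A1 [A2 A3]]; elim: n => [|n IH] a b /=; first exact: A1.
move=> [y [Py Ey]] [y' [Py' Ey']]; have e := IH _ _ Py Py'; subst y'.
exact: A2 Ey Ey'.
Qed.

Lemma Pn_disj (S : Type) (ar : S -> nat) (R : S) (X : structure ar) n :
  Ax R X -> forall m (a : X), Pn R n a -> Pn R m a -> n = m.
Proof.
move=> [A1 [A2 A3]]; elim: n => [|n IH] [|m] a //=.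
- by move=> H [y [_ Ey]]; case: H; exists y.
- by move=> [y [_ Ey]] H; case: H; exists y.
- move=> [y [Py Ey]] [y' [Py' Ey']]; have e := A3 _ _ _ Ey Ey'; subst y'.
  by rewrite (IH _ _ Py Py').
Qed.

Lemma Pn_bound (S : Type) (ar : S -> nat) (R : S) (X : structure ar) :
  Ax R X -> forall l : list X, exists M, forall a k, In a l -> Pn R k a -> k < M.
Proof.
move=> ax; elim=> [|c l [M HM]]; first by exists 0.
case: (classic (exists k, Pn R k c)) => [[k0 Hk0]|nk].
  exists (maxn M k0.+1) => a k [<-|H] P.
    by rewrite (Pn_disj ax P Hk0) leq_max ltnSn orbT.
  by apply: leq_trans (HM _ _ H P) (leq_maxl _ _).
exists M => a k [<-|H] P; [by case: nk; exists k | exact: HM _ _ H P].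
Qed.

Lemma noX (S : Type) (ar : S -> nat) (R : S) (X : structure ar) :
  Ax R X -> (forall n, exists a : X, Pn R n a) -> ~ finitely_many_orbits X.
Proof.
move=> ax ex [l Hl].
have [M HM] := Pn_bound ax l.
have [a Pa] := ex M.
have [b [inb [f [af fb]]]] := Hl a.
have Pb : Pn R M b by apply: (Pn_aut af); rewrite fb.
have e := Pn_uniq ax Pa Pb; subst b.
by have := HM _ _ inb Pa; rewrite ltnn.
Qed.

Definition Ech N (i j : 'I_N.+1) := nat_of_ord j = (nat_of_ord i).+1.
Definition chain (S : Type) (ar : S -> nat) (R : S) N := mkS ar R (ord0 : 'I_N.+1) (@Ech N).

Lemma In_mem (T0 : eqType) (x : T0) (s : seq T0) : x \in s -> In x s.
Proof. elim: s => //= y s IH; rewrite in_cons => /orP [/eqP ->|/IH]; auto. Qed.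

Lemma chain_orbits (S : Type) (ar : S -> nat) (R : S) N : finitely_many_orbits (chain ar R N).
Proof.
exists (enum 'I_N.+1) => a; exists a; split; first by apply: In_mem; rewrite mem_enum.
exists id; split=> //; split; first by exists id.
by [].
Qed.

Lemma chain_chi (S : Type) (ar : S -> nat) (R : S) N n : 2 <= ar R -> n <= N ->
  fo_sat (chain ar R N) (chi ar R n).
Proof.
move=> h hn v; apply/eval_chi.
have HE : forall x y : 'I_N.+1, @Erel S ar R (chain ar R N) x y <-> Ech x y.
  move=> x y; exact: (@interp_tup S ar R _ ord0 (@Ech N) x y h).
split; first split.
- move=> a b Ha Hb.
  have z : forall c : 'I_N.+1, ~ (exists y, @Erel S ar R (chain ar R N) y c) -> nat_of_ord c = 0.
    move=> [[|k] hk] //= H; case: H.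
    have hk' : k < N.+1 by apply: ltnW.
    exists (Ordinal hk'); apply/HE; by [].
  by apply: val_inj; rewrite /= (z _ Ha) (z _ Hb).
- split.
    move=> y x x' /HE e /HE e'; apply: val_inj; by rewrite /= e e'.
  move=> y y' x /HE e /HE e'; apply: val_inj; apply/succn_inj; by rewrite -e -e'.
have: forall k (hk : k < N.+1), @Pn S ar R (chain ar R N) k (Ordinal hk).
  elim=> [|k IH] hk /=.
    by move=> [y /HE].
  have hk' : k < N.+1 by apply: ltnW.
  exists (Ordinal hk'); split; first exact: IH.
  by apply/HE.
have hn' : n < N.+1 by [].
by move=> /(_ n hn') H; exists (Ordinal hn').
Qed.

Lemma core (S : Type) (ar : S -> nat) (R : S) (h : 2 <= ar R) (L : abstract_logic ar) :
  geq_FO L -> expressible L (fun A : structure ar => finitely_many_orbits A) ->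
  exists (th : sentence L) (G : sentence L -> Prop),
    countable_set G /\ G th /\ finitely_satisfiable G /\ ~ satisfiable G.
Proof.
move=> geq [th Hth].
have ex : forall n, exists psi : sentence L, forall A, fo_sat A (chi ar R n) <-> sat A psi.
  move=> n; apply: geq; exists (chi ar R n); split=> //; exact: sent_chi.
pose psi := fun n => proj1_sig (constructive_indefinite_description _ (ex n)).
have Hpsi : forall n A, fo_sat A (chi ar R n) <-> sat A (psi n).
  move=> n; exact: (proj2_sig (constructive_indefinite_description _ (ex n))).
exists th, (fun phi => phi = th \/ exists n, phi = psi n).
split; [|split; [by left|split]].
- exists (fun n => match n with 0 => Some th | k.+1 => Some (psi k) end) => x; split.
    by case=> [->|[n ->]]; [exists 0 | exists n.+1].
  by case=> [[|n]] [<-]; [left | right; exists n].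
- move=> l Hl.
  have [N HN] : exists N, forall phi, In phi l -> phi = th \/ exists n, n <= N /\ phi = psi n.
    elim: l Hl => [|c l IH] Hl; first by exists 0.
    have [N HN] := IH (fun phi H => Hl phi (or_intror H)).
    case: (Hl c (or_introl erefl)) => [ec|[k ec]].
      exists N => phi [<-|H]; [by left | exact: HN].
    exists (maxn N k) => phi [<-|H].
      by right; exists k; rewrite leq_maxr.
    case: (HN _ H) => [->|[n [hn ->]]]; [by left | right; exists n; split=> //].
    by apply: leq_trans hn (leq_maxl _ _).
  exists (chain ar R N) => phi /HN [->|[n [hn ->]]].
    by apply/Hth; exact: chain_orbits.
  by apply/Hpsi; exact: chain_chi.
- move=> [A HA].
  have PA : finitely_many_orbits A by apply/Hth; apply: HA; left.
  have Hn : forall n, fo_sat A (chi ar R n) by move=> n; apply/Hpsi; apply: HA; right; exists n.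
  have ax : Ax R A by have /eval_chi [] := Hn 0 (fun _ => point A).
  apply: (noX ax) PA => n.
  by have /eval_chi [] := Hn n (fun _ => point A).
Qed.

Theorem mainTheorem8 (S : Type) (ar : S -> nat)
  (S_countable : exists f : S -> nat, injective f)
  (Q R : S) (QR : Q <> R) (arR : 2 <= ar R) :
  let P : struct_class ar := fun A => finitely_many_orbits A in
  ~ FO_expressible P /\
  (forall L : abstract_logic ar, geq_FO L -> expressible L P -> ~ aleph0_compact L) /\
  (forall L : abstract_logic ar, geq_FO L -> expressible L P -> closed_under_negation L ->
     ~ exists PS : proof_system L, ps_sound PS /\ ps_complete PS).
Proof.
move=> P; split; first exact: (part1 arR).
split.
  move=> L geq ex comp.
  have [th [G [cG [Gth [fs ns]]]]] := core arR geq ex.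
  by apply: ns; apply: comp.
move=> L geq ex neg [PS [snd cmp]].
have [th [G [cG [Gth [fs ns]]]]] := core arR geq ex.
have [nu Hnu] := neg th.
have ent : entails G nu by move=> A HA; case: ns; exists A.
have [pi [cpi prem]] := cmp G nu ent.
have [A HA] := fs (th :: premisses pi) (fun phi H => match H with or_introl e => eq_ind _ G Gth _ e | or_intror H' => prem phi H' end).
have Ath : sat A th by apply: HA; left.
have : sat A nu by rewrite -cpi; apply: snd => phi H; apply: HA; right.
by move/Hnu.
Qed.
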